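(* Consider the delayed online convex optimization setting described in the context, with a non-empty, closed, convex domain $\mathcal{X}\subseteq\mathbb{R}^n$. Let $\lambda>0$, $G\ge0$, and assume each $f_t$ is $\lambda$-strongly convex with respect to the Euclidean norm and satisfies $\max_{x\in\mathcal{X}}\|\nabla f_t(x)\|_2\le G$. Consider the learner (Delayed OMD) with learning rates $\eta_t=\frac{2}{t\lambda}$, which plays an arbitrary $x_1\in\mathcal{X}$ and, for each $t\ge1$, after observing $g_\tau$ for all $\tau\in o_{t+1}\setminus o_t$, plays $$x_{t+1}=\arg\min_{x\in\mathcal{X}}\ \sum_{\tau\in o_{t+1}\setminus o_t}\langle g_\tau,x\rangle+\frac{1}{\eta_t}\|x-x_t\|_2^2 .$$ Then $$\mathrm{Reg}_T=\mathcal{O}\left(\frac{G^2}{\lambda}\left(\ln T+\min\{\sigma_{\max}\ln T,\sqrt{d_{\mathrm{tot}}}\}\right)\right),$$ i.e. there is an absolute numerical constant $C>0$ such that for every $T\ge2$, $\mathrm{Reg}_T\le C\frac{G^2}{\lambda}\left(\ln T+\min\{\sigma_{\max}\ln T,\sqrt{d_{\mathrm{tot}}}\}\right)$.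
   Context: Delayed OCO setting: $T\ge1$ and $n\ge1$ are integers, $[T]=\{1,\dots,T\}$. For each round $t\in[T]$ the learner chooses $x_t\in\mathcal{X}$ and incurs loss $f_t(x_t)$, where $f_t:\mathcal{X}\to\mathbb{R}$ is convex and differentiable (possibly adversarial). The gradient $g_t=\nabla f_t(x_t)$ is revealed only at the end of round $t+d_t$, where $d_t\in\{0,1,2,\dots\}$ is an arbitrary delay unknown to the learner, with $t+d_t\le T$ for all $t\in[T]$. For $t\ge1$ define $o_t=\{\tau\in\mathbb{N}:\tau+d_\tau<t\}\subseteq[t-1]$ and $m_t=[t-1]\setminus o_t$. Let $\sigma_{\max}=\max_{t\in[T]}|m_t|$ and $d_{\mathrm{tot}}=\sum_{t=1}^Td_t$. The regret is $\mathrm{Reg}_T=\sup_{u\in\mathcal{X}}\sum_{t=1}^T(f_t(x_t)-f_t(u))$. *)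

(* Defs.v *)
From HB Require Import structures.
From mathcomp Require Import all_boot all_order all_algebra.
From mathcomp Require Import all_classical all_reals all_analysis.
Set Implicit Arguments. Unset Strict Implicit. Unset Printing Implicit Defensive.
Import Order.TTheory GRing.Theory Num.Theory.
Import numFieldNormedType.Exports.
Local Open Scope classical_set_scope.
Local Open Scope ring_scope.

Section Defs.
Variables (R : realType) (n : nat).
Notation vec := 'rV[R]_n.

Definition dotp (u v : vec) : R := \sum_(i < n) u 0 i * v 0 i.
Definition norm2 (u : vec) : R := Num.sqrt (dotp u u).

Definition grad (f : vec -> R) (x : vec) : vec :=
  \row_(i < n) ('d f x (delta_mx 0 i : vec)).

Definition convex_dom (X : set vec) : Prop :=
  forall x y (a : R), X x -> X y -> 0 <= a <= 1 -> X (a *: x + (1 - a) *: y).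

Definition strongly_convex_on (lam : R) (X : set vec) (f : vec -> R) : Prop :=
  forall x y (a : R), X x -> X y -> 0 <= a <= 1 ->
    f (a *: x + (1 - a) *: y) <=
      a * f x + (1 - a) * f y - lam / 2 * a * (1 - a) * (norm2 (x - y)) ^+ 2.

(* Delays: o_t = {tau in N, tau >= 1 : tau + d tau < t} *)
Definition in_o (d : nat -> nat) (t tau : nat) : bool :=
  (1 <= tau)%N && (tau + d tau < t)%N.

(* |m_t| = |[t-1] \ o_t| *)
Definition card_m (d : nat -> nat) (t : nat) : nat :=
  #|[set tau : 'I_t | (1 <= tau)%N && ~~ in_o d t tau]|.

Definition sigma_max (d : nat -> nat) (T : nat) : nat :=
  \max_(1 <= t < T.+1) card_m d t.

Definition d_tot (d : nat -> nat) (T : nat) : nat := \sum_(1 <= t < T.+1) d t.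

Definition omd_obj (d : nat -> nat) (g : nat -> vec) (eta : R) (xt : vec)
  (t : nat) (x : vec) : R :=
  \sum_(0 <= tau < t.+1 | in_o d t.+1 tau && ~~ in_o d t tau) dotp (g tau) x
  + eta^-1 * (norm2 (x - xt)) ^+ 2.

End Defs.

(* Main.v *)
Require Import Defs.
From HB Require Import structures.
From mathcomp Require Import all_boot all_order all_algebra.
From mathcomp Require Import all_classical all_reals all_analysis.
From mathcomp Require Import ring lra.
Set Implicit Arguments. Unset Strict Implicit. Unset Printing Implicit Defensive.
Import Order.TTheory GRing.Theory Num.Theory.
Import numFieldNormedType.Exports.
Local Open Scope classical_set_scope.
Local Open Scope ring_scope.

Section Vec.
Variables (R : realType) (n : nat).
Notation vec := 'rV[R]_n.
Implicit Types u v w : vec.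

Lemma dotpC u v : dotp u v = dotp v u.
Proof. by rewrite /dotp; apply: eq_bigr => i _; rewrite mulrC. Qed.

Lemma dotpDl u v w : dotp (u + v) w = dotp u w + dotp v w.
Proof. by rewrite /dotp -big_split; apply: eq_bigr => i _; rewrite !mxE mulrDl. Qed.

Lemma dotpZl (a : R) u v : dotp (a *: u) v = a * dotp u v.
Proof. by rewrite /dotp mulr_sumr; apply: eq_bigr => i _; rewrite !mxE mulrA. Qed.

Lemma dotpNl u v : dotp (- u) v = - dotp u v.
Proof. by rewrite /dotp -sumrN; apply: eq_bigr => i _; rewrite !mxE mulNr. Qed.

Lemma dotpBl u v w : dotp (u - v) w = dotp u w - dotp v w.
Proof. by rewrite dotpDl dotpNl. Qed.

Lemma dotpDr u v w : dotp w (u + v) = dotp w u + dotp w v.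
Proof. by rewrite dotpC dotpDl !(dotpC w). Qed.
Lemma dotpBr u v w : dotp w (u - v) = dotp w u - dotp w v.
Proof. by rewrite dotpC dotpBl !(dotpC w). Qed.
Lemma dotpZr (a : R) u v : dotp u (a *: v) = a * dotp u v.
Proof. by rewrite dotpC dotpZl dotpC. Qed.

Lemma dotp_suml (I : Type) (r : seq I) (P : pred I) (F : I -> vec) v :
  dotp (\sum_(i <- r | P i) F i) v = \sum_(i <- r | P i) dotp (F i) v.
Proof.
elim/big_rec2: _ => [|i y1 y2 _ <-]; last by rewrite dotpDl.
by rewrite /dotp big1 // => i _; rewrite mxE mul0r.
Qed.

Lemma dotp_ge0 u : 0 <= dotp u u.
Proof. by rewrite /dotp sumr_ge0 // => i _; rewrite -expr2 sqr_ge0. Qed.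

Lemma norm2_ge0 u : 0 <= norm2 u.
Proof. exact: sqrtr_ge0. Qed.

Lemma norm2_sq u : norm2 u ^+ 2 = dotp u u.
Proof. by rewrite /norm2 sqr_sqrtr // dotp_ge0. Qed.

Lemma dotp_sq u : dotp u u = norm2 u ^+ 2.
Proof. by rewrite norm2_sq. Qed.

Lemma dotp_eq0 u : dotp u u = 0 -> u = 0.
Proof.
move=> /eqP; rewrite /dotp psumr_eq0; last by move=> i _; rewrite -expr2 sqr_ge0.
move=> /allP H; apply/rowP => i; rewrite mxE.
have := H i (mem_index_enum _); by rewrite -expr2 sqrf_eq0 /= => /eqP.
Qed.

Lemma CS u v : dotp u v <= norm2 u * norm2 v.
Proof.
have key : dotp u v ^+ 2 <= dotp u u * dotp v v.
  have H r : 0 <= dotp u u + 2 * r * dotp u v + r ^+ 2 * dotp v v.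
    have := dotp_ge0 (u + r *: v).
    rewrite !dotpDl !dotpDr !dotpZl !dotpZr (dotpC v u).
    by move=> h; apply: le_trans h _; rewrite le_eqVlt; apply/orP; left; apply/eqP; ring.
  have [C0|Cn0] := eqVneq (dotp v v) 0.
    have v0 := dotp_eq0 C0.
    have z : dotp u v = 0 by rewrite v0 /dotp big1 // => i _; rewrite mxE mulr0.
    by rewrite z C0 expr0n mulr0.
  have Cp : 0 < dotp v v by rewrite lt_def Cn0 dotp_ge0.
  have := H (- dotp u v / dotp v v).
  set A := dotp u u; set B := dotp u v; set C := dotp v v => h.
  have e : A + 2 * (- B / C) * B + (- B / C) ^+ 2 * C = (A * C - B ^+ 2) / C.
    by field; rewrite gt_eqF.
  rewrite e pmulr_lge0 ?invr_gt0 // subr_ge0 in h; by [].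
have nn : 0 <= norm2 u * norm2 v by rewrite mulr_ge0 // norm2_ge0.
have [le0|gt0] := lerP (dotp u v) 0; first exact: le_trans le0 nn.
rewrite -(ler_pXn2r (n:=2)) //; last by rewrite nnegrE ltW.
by rewrite exprMn !norm2_sq.
Qed.

Lemma norm2_sub_sym u v : norm2 (u - v) = norm2 (v - u).
Proof. by rewrite -opprB /norm2 dotpNl dotpC dotpNl opprK. Qed.

End Vec.

Section FO.
Variables (R : realType) (n : nat).
Notation vec := 'rV[R]_n.

Lemma near_right (P : R -> Prop) : (exists2 e : R, 0 < e & forall h, 0 < h -> h < e -> P h) -> \forall h \near 0^'+, P h.
Proof.
move=> [e e0 H]; exists e => //= y; rewrite /ball_ /= sub0r normrN => ye y0.
by apply: H => //; rewrite ltr_normlW.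
Qed.

Lemma diff_grad (f : vec -> R) x v : 'd f x v = dotp (grad f x) v.
Proof.
rewrite {1}(row_sum_delta v) linear_sum /dotp; apply: eq_bigr => i _.
by rewrite linearZ /= /grad mxE mulrC.
Qed.

Lemma first_order (X : set vec) (f : vec -> R) (lam : R) x y :
  convex_dom X -> strongly_convex_on lam X f -> differentiable f x ->
  X x -> X y ->
  f x + dotp (grad f x) (y - x) + lam / 2 * norm2 (y - x) ^+ 2 <= f y.
Proof.
move=> cX sc df Xx Xy.
set v := y - x.
set q := fun h : R => h^-1 *: ((f \o shift x) (h *: v) - f x).
have cv : q @ 0^' --> 'D_v f x by exact: diff_derivable.
have cvr : q @ 0^'+ --> 'D_v f x.
  move=> A /cv /nbhs_ballP [_ /posnumP[e] xe_A].
  by exists e%:num => //= z xe_z; rewrite lt_def => /andP [xney _]; apply: xe_A.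
rewrite (deriveE v df) diff_grad in cvr.
set N := norm2 v ^+ 2.
have N0 : 0 <= N by rewrite /N exprn_ge0 // norm2_ge0.
have key h : 0 < h -> h <= 1 -> q h <= (f y - f x - lam / 2 * N) + h * (lam / 2 * N).
  move=> h0 h1.
  have e : h *: v + x = h *: y + (1 - h) *: x.
    by rewrite scalerBl scale1r [RHS]addrA [RHS]addrAC /v scalerBr.
  have := sc y x h Xy Xx; rewrite ltW //= h1 => /(_ isT) H.
  rewrite /q /= e.
  rewrite -/v -/N in H.
  change (h^-1 * (f (h *: y + (1 - h) *: x) - f x) <= f y - f x - lam / 2 * N + h * (lam / 2 * N)).
  rewrite ler_pdivrMl //.
  apply: (le_trans (lerB H (lexx (f x)))).
  rewrite le_eqVlt; apply/orP; left; apply/eqP; ring.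
set B := lam / 2 * N.
suff : dotp (grad f x) v <= f y - f x - B by rewrite /B; lra.
apply/ler_addgt0Pr => e e0.
apply: (cvgr_to_le cvr); apply: near_right.
have Bp : 0 < `|B| + 1 by rewrite ltr_pwDr // normr_ge0.
exists (Num.min 1 (e / (`|B| + 1))).
  by rewrite lt_min ltr01 divr_gt0.
move=> h h0; rewrite lt_min => /andP [h1 he].
apply: (le_trans (key h h0 (ltW h1))); rewrite lerD2l.
apply: (le_trans (ler_wpM2l (ltW h0) (ler_norm B))).
rewrite ltr_pdivlMr // in he.
have : h * `|B| <= h * (`|B| + 1) by apply: ler_wpM2l; [exact: ltW | lra].
lra.
Qed.
End FO.

Section OPT.
Variables (R : realType) (n : nat).
Notation vec := 'rV[R]_n.

Lemma dotp_expand (a w : vec) e : dotp (a + e *: w) (a + e *: w) = dotp a a + 2 * e * dotp a w + e ^+ 2 * dotp w w.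
Proof. rewrite dotpDl !dotpDr !dotpZl !dotpZr (dotpC w a); ring. Qed.

Lemma opt_vi (X : set vec) (c : R) (p z x : vec) :
  convex_dom X -> 0 < c -> X x ->
  (forall y, X y -> dotp p x + c * norm2 (x - z) ^+ 2 <= dotp p y + c * norm2 (y - z) ^+ 2) ->
  forall y, X y -> 0 <= dotp p (y - x) + 2 * c * dotp (x - z) (y - x).
Proof.
move=> cX c0 Xx H y Xy.
set w := y - x; set a := x - z.
set L := dotp p w + 2 * c * dotp a w.
set W := dotp w w.
have W0 : 0 <= W by exact: dotp_ge0.
have key e : 0 < e -> e <= 1 -> 0 <= e * (L + e * c * W).
  move=> e0 e1.
  have Xe : X (e *: y + (1 - e) *: x) by apply: cX => //; rewrite ltW //= e1.
  have := H _ Xe.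
  have ve : e *: y + (1 - e) *: x = x + e *: w.
    by rewrite /w scalerBr scalerBl scale1r addrCA addrA.
  have va : x + e *: w - z = a + e *: w by rewrite /a addrAC.
  rewrite ve va -/a !norm2_sq.
  have dpx : dotp p (x + e *: w) = dotp p x + e * dotp p w by rewrite dotpDr dotpZr.
  have ex : dotp (a + e *: w) (a + e *: w) = dotp a a + 2 * e * dotp a w + e ^+ 2 * dotp w w.
    exact: dotp_expand.
  rewrite dpx ex /L /W.
  move=> h; rewrite -subr_ge0 in h.
  apply: (le_trans h); rewrite le_eqVlt; apply/orP; left; apply/eqP; ring.
rewrite -/L; rewrite leNgt; apply/negP => L0.
set K := c * W.
have K0 : 0 <= K by rewrite mulr_ge0 // ltW.
set e := - L / (2 * K - L).
have den : 0 < 2 * K - L by lra.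
have e0 : 0 < e by rewrite divr_gt0 // oppr_gt0.
have e1 : e <= 1 by rewrite ler_pdivrMr // mul1r; lra.
have := key e e0 e1.
rewrite pmulr_rge0 // -mulrA -/K.
have -> : L + e * K = L * (K - L) / (2 * K - L).
  by rewrite /e; field; rewrite gt_eqF.
rewrite pmulr_lge0 ?invr_gt0 //.
have : 0 < K - L by lra.
move=> h1 h2; have : L * (K - L) < 0 by rewrite pmulr_llt0.
lra.
Qed.

Lemma diam (X : set vec) (f : vec -> R) (lam G : R) x y :
  convex_dom X -> strongly_convex_on lam X f -> 0 < lam ->
  (forall z, X z -> differentiable f z) ->
  (forall z, X z -> norm2 (grad f z) <= G) ->
  X x -> X y -> norm2 (x - y) <= 2 * G / lam.
Proof.
move=> cX sc l0 df gb Xx Xy.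
have h1 := first_order cX sc (df x Xx) Xx Xy.
have h2 := first_order cX sc (df y Xy) Xy Xx.
rewrite (norm2_sub_sym y x) in h1.
have c1 : - dotp (grad f x) (y - x) <= G * norm2 (x - y).
  rewrite !dotpBr opprB -dotpBr.
  apply: (le_trans (CS _ _)); apply: ler_wpM2r; [exact: norm2_ge0 | exact: gb].
have c2 : - dotp (grad f y) (x - y) <= G * norm2 (x - y).
  rewrite !dotpBr opprB -dotpBr.
  apply: (le_trans (CS _ _)); rewrite norm2_sub_sym; apply: ler_wpM2r; [exact: norm2_ge0 | exact: gb].
set N := norm2 (x - y) in c1 c2 h1 h2 *.
have N0 : 0 <= N := norm2_ge0 _.
have : lam * N ^+ 2 <= 2 * G * N by lra.
rewrite ler_pdivlMr // => h.
have [->|Np] := eqVneq N 0.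
  rewrite mul0r; have := gb x Xx; have := norm2_ge0 (grad f x); lra.
have Np' : 0 < N by rewrite lt_def Np N0.
rewrite mulrC; rewrite expr2 mulrA in h.
by rewrite -(ler_pM2r Np').
Qed.
End OPT.

Section Comb.
Variable R : realType.

Lemma pick_sum (a b k : nat) (F : nat -> R) : (a <= k < b)%N ->
  \sum_(a <= t < b) (k == t)%:R * F t = F k.
Proof.
move=> hk.
rewrite (bigD1_seq k) /= ?mem_index_iota ?iota_uniq // eqxx mul1r big1 ?addr0 //.
by move=> i /negPf; rewrite eq_sym => ->; rewrite mul0r.
Qed.

Lemma sum_widen (a b m k : nat) (F : nat -> R) : (a <= m)%N -> (k <= b)%N ->
  \sum_(m <= s < k) F s = \sum_(a <= s < b) ((m <= s)%N && (s < k)%N)%:R * F s.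
Proof.
move=> am kb.
have [mk|km] := leqP m k; last first.
  rewrite big_geq; last exact: ltnW.
  symmetry; apply: big1 => i _.
  case: andP => [[h1 h2]|_]; last by rewrite mul0r.
  by have := ltn_trans (leq_ltn_trans h1 h2) km; rewrite ltnn.
rewrite [RHS](@big_cat_nat _ _ _ m) //=; last exact: leq_trans mk kb.
rewrite [X in _ = X + _]big1_seq ?add0r; last first.
  by move=> i /andP[_]; rewrite mem_index_iota => /andP[_ h]; rewrite leqNgt h /= mul0r.
rewrite [RHS](@big_cat_nat _ _ _ k) //=.
rewrite [X in _ = _ + X]big1_seq ?addr0; last first.
  by move=> i /andP[_]; rewrite mem_index_iota => /andP[h _]; rewrite ltnNge h andbF mul0r.
apply: eq_big_seq => i; rewrite mem_index_iota => /andP[h1 h2].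
by rewrite h1 h2 mul1r.
Qed.

Lemma cnt_eq (b m k : nat) :
  \sum_(0 <= i < b) ((m <= i)%N && (i < k)%N)%:R = (minn b k - m)%:R :> R.
Proof.
elim: b => [|b IH]; first by rewrite big_geq // min0n sub0n.
rewrite big_nat_recr //= IH -natrD; congr (_%:R).
case: (boolP ((m <= b)%N && (b < k)%N)) => /= h.
  move/andP: h => [h1 h2]; rewrite addn1. 
  rewrite (minn_idPl (ltnW h2)) (minn_idPl h2) subSn //.
rewrite addn0; move: h; rewrite negb_and -!ltnNge => /orP [h|h].
  have e1 : (minn b.+1 k - m = 0)%N by apply/eqP; rewrite subn_eq0 (leq_trans (geq_minl _ _) h).
  have e2 : (minn b k - m = 0)%N by apply/eqP; rewrite subn_eq0 (leq_trans (geq_minl _ _) (ltnW h)).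
  by rewrite e1 e2.
rewrite ltnS in h.
by rewrite (minn_idPr h) (minn_idPr (leq_trans h (leqnSn _))).
Qed.

Lemma cnt_le (a b m k : nat) :
  \sum_(a <= i < b) ((m <= i)%N && (i < k)%N)%:R <= (k - m)%:R :> R.
Proof.
have [ab|ba] := leqP a b; last by rewrite big_geq ?ler0n; last exact: ltnW.
have h0 : \sum_(a <= i < b) ((m <= i)%N && (i < k)%N)%:R <= \sum_(0 <= i < b) ((m <= i)%N && (i < k)%N)%:R :> R.
  rewrite [X in _ <= X](@big_cat_nat _ _ _ a) /=; last exact: ab; last exact: leq0n.
  rewrite lerDr; apply: sumr_ge0 => i _; exact: ler0n.
apply: (le_trans h0); rewrite cnt_eq ler_nat; apply: leq_sub2r; exact: geq_minr.
Qed.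
End Comb.

Section Comb2.
Variables (R : realType) (d : nat -> nat) (T : nat).
Hypothesis hd : forall t, (1 <= t <= T)%N -> (t + d t <= T)%N.

Definition Sc t : R := \sum_(1 <= tau < T.+1) ((tau + d tau)%N == t)%:R.
Definition Hs : R := \sum_(1 <= tau < T.+1) (tau%:R)^-1.

Lemma a_range tau : (1 <= tau < T.+1)%N -> (1 <= tau + d tau < T.+1)%N.
Proof.
move=> /andP [h1 h2]; apply/andP; split; first exact: leq_trans h1 (leq_addr _ _).
by rewrite ltnS; apply: hd; rewrite h1 -ltnS.
Qed.

Lemma regroup (F : nat -> nat -> R) :
  \sum_(1 <= t < T.+1) \sum_(1 <= tau < T.+1) (((tau + d tau)%N == t)%:R * F tau t)
  = \sum_(1 <= tau < T.+1) F tau (tau + d tau)%N.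
Proof.
rewrite exchange_big /=; apply: eq_big_nat => tau htau.
by apply: pick_sum; apply: a_range.
Qed.

Lemma Sc_mul (F : nat -> R) :
  \sum_(1 <= t < T.+1) Sc t * F t = \sum_(1 <= tau < T.+1) F (tau + d tau)%N.
Proof.
rewrite -(regroup (fun _ t => F t)); apply: eq_bigr => t _.
by rewrite /Sc mulr_suml.
Qed.

Lemma inv_le tau : (1 <= tau)%N -> ((tau + d tau)%N%:R)^-1 <= (tau%:R)^-1 :> R.
Proof.
move=> h; have p1 : (0 < tau%:R :> R) by rewrite ltr0n.
have p2 : (0 < (tau + d tau)%N%:R :> R) by rewrite ltr0n; exact: leq_trans h (leq_addr _ _).
rewrite lef_pV2 ?posrE // ler_nat; exact: leq_addr.
Qed.

Lemma sumS_le_H : \sum_(1 <= t < T.+1) Sc t / t%:R <= Hs.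
Proof.
rewrite (Sc_mul (fun t => (t%:R)^-1)) /Hs; apply: ler_sum_nat => tau /andP [h _].
exact: inv_le.
Qed.

Lemma card_mE t : (card_m d t)%:R = \sum_(1 <= tau < t) (t <= tau + d tau)%N%:R :> R.
Proof.
rewrite /card_m -sum1_card.
have -> : (\sum_(i in [set tau : 'I_t | (1 <= tau)%N && ~~ in_o d t tau]) 1 =
     \sum_(0 <= i < t) ((1 <= i) && (t <= i + d i))%N)%N.
  rewrite big_mkord big_mkcond /=; apply: eq_bigr => i _.
  rewrite (_ : (i \in _) = ((1 <= i)%N && ~~ in_o d t i)); last first.
    by apply/idP/idP => [/set_mem|h]; [|apply: mem_set].
  rewrite /in_o; case: (0 < i)%N => /=; last by [].
  by rewrite -leqNgt; case: (t <= i + d i)%N.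
rewrite natr_sum.
have [t0|tp] := posnP t; first by rewrite t0 !big_geq.
rewrite big_ltn //= add0r; apply: eq_big_nat => i /andP [h _].
by rewrite h.
Qed.

Definition sig : R := (sigma_max d T)%:R.

Lemma card_m_le t : (1 <= t <= T)%N -> (card_m d t <= sigma_max d T)%N.
Proof.
move=> ht; rewrite /sigma_max.
apply: (@leq_bigmax_seq _ _ _ (fun t => card_m d t) t) => //.
by rewrite mem_index_iota ltnS.
Qed.

Lemma cm_le t : (1 <= t <= T)%N -> \sum_(1 <= tau < t) (t <= tau + d tau)%N%:R <= sig.
Proof. by move=> ht; rewrite -card_mE /sig ler_nat card_m_le. Qed.

Lemma ind_ge0 (b : bool) : 0 <= b%:R :> R.
Proof. exact: ler0n. Qed.

Lemma Sc_le t : (1 <= t <= T)%N -> Sc t <= 1 + sig.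
Proof.
move=> ht.
have e1 : \sum_(1 <= tau < T.+1) ((t == tau)%:R * 1) = 1 :> R.
  by apply: pick_sum; rewrite ltnS.
have e2 : \sum_(1 <= tau < t) (t <= tau + d tau)%N%:R =
   \sum_(1 <= tau < T.+1) (((1 <= tau)%N && (tau < t)%N)%:R * (t <= tau + d tau)%N%:R) :> R.
  by apply: sum_widen => //; case/andP: ht => _ h; exact: leq_trans h (leqnSn _).
apply: (@le_trans _ _ (\sum_(1 <= tau < T.+1) ((t == tau)%:R * 1) + \sum_(1 <= tau < t) (t <= tau + d tau)%N%:R)); last first.
  by rewrite e1 lerD2l; exact: cm_le.
rewrite e2 -big_split /=.
apply: ler_sum_nat => tau /andP [h1 h2].
have [e|ne] := eqVneq (tau + d tau)%N t; last first.
  apply: addr_ge0; [exact: mulr_ge0 (ind_ge0 _) ler01 | exact: mulr_ge0 (ind_ge0 _) (ind_ge0 _)].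
rewrite h1 /= mulr1.
have [tE|tn] := eqVneq tau t.
  rewrite mulr1n lerDl; exact: mulr_ge0 (ind_ge0 _) (ind_ge0 _).
have tl : (tau < t)%N by rewrite ltn_neqAle tn -e leq_addr.
rewrite tl -e leqnn /= mul1r lerDr.
exact: lexx.
Qed.

Lemma count_le s : (1 <= s <= T)%N ->
  \sum_(1 <= tau < T.+1) ((tau <= s)%N && (s < tau + d tau)%N)%:R <= sig.
Proof.
move=> /andP [s1 sT].
have [sE|sl] := eqVneq s T.
  rewrite big1_seq; first exact: ler0n.
  move=> tau /andP [_]; rewrite mem_index_iota => /andP [h1 h2].
  rewrite sE; have h : (tau + d tau <= T)%N by apply: hd; rewrite h1 -ltnS h2.
  by rewrite ltnNge h andbF.
have sT' : (s.+1 <= T)%N by rewrite ltn_neqAle sl sT.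
apply: le_trans (cm_le (t := s.+1) _); last by rewrite sT' andbT.
rewrite [X in _ <= X](@sum_widen R 1%N T.+1); [|by []|by rewrite ltnS; exact: ltnW].
apply: ler_sum_nat => tau /andP [h1 _].
rewrite h1 /= ltnS.
by case: (tau <= s)%N; case: (s < tau + d tau)%N; rewrite /= ?mul1r ?mul0r.
Qed.

Lemma sig_ge0 : 0 <= sig.
Proof. exact: ler0n. Qed.

Lemma Hs_ge0 : 0 <= Hs.
Proof. by apply: sumr_ge0 => i _; rewrite invr_ge0 ler0n. Qed.

Definition Q1 : R := \sum_(1 <= t < T.+1) Sc t ^+ 2 / t%:R.
Definition Q2 : R := \sum_(1 <= tau < T.+1) Num.min 2 (\sum_(tau <= s < tau + d tau) Sc s / s%:R).

Lemma Sc_ge0 t : 0 <= Sc t.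
Proof. by apply: sumr_ge0 => i _; exact: ler0n. Qed.

Lemma Q1_sig : Q1 <= (1 + sig) * Hs.
Proof.
rewrite /Q1.
have -> : \sum_(1 <= t < T.+1) Sc t ^+ 2 / t%:R = \sum_(1 <= t < T.+1) Sc t * (Sc t / t%:R).
  by apply: eq_bigr => t _; rewrite expr2 mulrA.
rewrite (Sc_mul (fun t => Sc t / t%:R)) /Hs mulr_sumr; apply: ler_sum_nat => tau htau.
have := a_range htau => hr.
apply: ler_pM; [exact: Sc_ge0 | by rewrite invr_ge0 ler0n | exact: Sc_le | ].
by apply: inv_le; case/andP: htau.
Qed.

Lemma inner_widen tau : (1 <= tau < T.+1)%N ->
  \sum_(tau <= s < tau + d tau) Sc s / s%:R =
  \sum_(1 <= s < T.+1) ((tau <= s)%N && (s < tau + d tau)%N)%:R * (Sc s / s%:R).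
Proof.
move=> htau; have /andP [h1 h2] := a_range htau.
by apply: sum_widen; [case/andP: htau | exact: ltnW].
Qed.

Lemma Q2_le_inner : Q2 <= \sum_(1 <= tau < T.+1) \sum_(tau <= s < tau + d tau) Sc s / s%:R.
Proof.
by apply: ler_sum_nat => tau _; rewrite ge_min lexx orbT.
Qed.

Lemma Q2_sig : Q2 <= sig * Hs.
Proof.
apply: le_trans Q2_le_inner _.
rewrite (eq_big_nat _ _ inner_widen) exchange_big /=.
apply: le_trans (_ : \sum_(1 <= s < T.+1) sig * (Sc s / s%:R) <= _); last first.
  by rewrite -mulr_sumr; apply: ler_wpM2l; [exact: sig_ge0 | exact: sumS_le_H].
apply: ler_sum_nat => s hs; rewrite -mulr_suml.
apply: ler_wpM2r; first by rewrite mulr_ge0 ?Sc_ge0 // invr_ge0 ler0n.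
by apply: count_le; rewrite -ltnS.
Qed.

Lemma comb_sig : Q1 / 2 + Q2 <= 2 * (1 + sig) * Hs.
Proof.
have h1 := Q1_sig; have h2 := Q2_sig; have h3 := sig_ge0; have h4 := Hs_ge0.
have : 0 <= sig * Hs by apply: mulr_ge0.
nra.
Qed.
End Comb2.

Section CombD.
Variables (R : realType) (d : nat -> nat) (T : nat).
Hypothesis hd : forall t, (1 <= t <= T)%N -> (t + d t <= T)%N.

Definition Dr : R := (d_tot d T)%:R.
Definition Kd : R := Num.sqrt Dr.

Lemma Dr_sum : Dr = \sum_(1 <= tau < T.+1) (d tau)%:R.
Proof. by rewrite /Dr /d_tot natr_sum. Qed.

Lemma Dr_ge0 : 0 <= Dr.
Proof. exact: ler0n. Qed.

Lemma Kd_ge0 : 0 <= Kd.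
Proof. exact: sqrtr_ge0. Qed.

Lemma d_le_Dr tau : (1 <= tau < T.+1)%N -> (d tau)%:R <= Dr.
Proof.
move=> h; rewrite Dr_sum (bigD1_seq tau) /= ?mem_index_iota ?iota_uniq //.
rewrite lerDl; apply: sumr_ge0 => i _; exact: ler0n.
Qed.

Lemma cntK (Kr : R) N : 0 <= Kr -> \sum_(1 <= tau < N.+1) ((tau%:R <= Kr)%R)%:R <= Num.min N%:R Kr.
Proof.
move=> K0; elim: N => [|N IH]; first by rewrite big_geq // le_min lexx K0.
rewrite big_nat_recr //=.
have [h|h] := boolP (N.+1%:R <= Kr).
  rewrite mulr1n; apply: le_trans (lerD IH (lexx 1)) _.
  rewrite (@min_l _ _ N%:R); last by apply: le_trans h; rewrite ler_nat.
  by rewrite (min_l h) -natr1.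
rewrite mulr0n addr0; apply: le_trans IH _.
rewrite -ltNge in h; rewrite le_min !ge_min ler_nat leqnSn lexx orbT.
by [].
Qed.

Lemma cntK' (Kr : R) : 0 <= Kr -> \sum_(1 <= tau < T.+1) ((tau%:R <= Kr)%R)%:R <= Kr.
Proof. by move=> K0; apply: le_trans (cntK T K0) _; rewrite ge_min lexx orbT. Qed.

Lemma Kd_pos tau : (1 <= tau < T.+1)%N -> d tau <> 0%N -> 1 <= Kd.
Proof.
move=> h dn; rewrite /Kd -sqrtr1 ler_sqrt; last exact: Dr_ge0.
apply: le_trans (d_le_Dr h); rewrite ler1n lt0n; exact/eqP.
Qed.

Lemma perK (c h : R) tau : (1 <= tau < T.+1)%N -> 1 <= c -> 0 <= h ->
  (d tau = 0%N -> h = 0) -> h <= c -> h <= (d tau)%:R / tau%:R ->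
  h <= c * ((tau%:R <= Kd)%R)%:R + (d tau)%:R / Kd.
Proof.
move=> ht c1 h0 hz hc hd'.
have rhs0 : 0 <= c * ((tau%:R <= Kd)%R)%:R + (d tau)%:R / Kd.
  apply: addr_ge0; first by apply: mulr_ge0; [apply: le_trans c1 | exact: ler0n].
  by apply: divr_ge0; [exact: ler0n | exact: Kd_ge0].
have [dz|dn] := eqVneq (d tau) 0%N; first by rewrite (hz dz).
have K1 := Kd_pos ht (elimN eqP dn).
have [tK|tK] := boolP (tau%:R <= Kd).
  rewrite mulr1n; apply: le_trans hc _; rewrite mulr1 lerDl.
  by apply: divr_ge0; [exact: ler0n | exact: le_trans K1].
rewrite mulr0n mulr0 add0r; apply: le_trans hd' _.
rewrite -ltNge in tK.
apply: ler_wpM2l; first exact: ler0n.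
have K0 : 0 < Kd by apply: lt_le_trans ltr01 K1.
rewrite lef_pV2 ?posrE; [exact: ltW | exact: lt_trans K0 tK | exact: K0].
Qed.

Lemma sumK (c : R) (h : nat -> R) : 1 <= c ->
  (forall tau, (1 <= tau < T.+1)%N -> 
     [/\ 0 <= h tau, d tau = 0%N -> h tau = 0, h tau <= c & h tau <= (d tau)%:R / tau%:R]) ->
  \sum_(1 <= tau < T.+1) h tau <= (c + 1) * Kd.
Proof.
move=> c1 H.
apply: le_trans (_ : \sum_(1 <= tau < T.+1) (c * ((tau%:R <= Kd)%R)%:R + (d tau)%:R / Kd) <= _).
  apply: ler_sum_nat => tau ht; have [a1 a2 a3 a4] := H tau ht; exact: perK.
rewrite big_split /= -mulr_sumr -mulr_suml -Dr_sum mulrDl mul1r.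
apply: lerD; first by apply: ler_wpM2l; [exact: le_trans c1 | exact: cntK' Kd_ge0].
have [K0|Kp] := eqVneq Kd 0; first by rewrite K0 invr0 mulr0.
have -> : Dr = Kd ^+ 2 by rewrite /Kd sqr_sqrtr // Dr_ge0.
by rewrite expr2 mulrK // unitfE.
Qed.
End CombD.

Section CombD2.
Variables (R : realType) (d : nat -> nat) (T : nat).
Hypothesis hd : forall t, (1 <= t <= T)%N -> (t + d t <= T)%N.
Local Notation S := (Sc R d T).
Local Notation K := (Kd R d T).

Definition SA : R := \sum_(1 <= tau < T.+1) (d tau)%:R / (tau + d tau)%N%:R.
Definition SM : R := \sum_(1 <= tau < T.+1) Num.min 2 ((d tau)%:R / tau%:R).

Lemma SA_le : SA <= 2 * K.
Proof.
have -> : 2 * K = (1 + 1) * K by ring.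
apply: sumK; first exact: lexx.
move=> tau /andP [h1 h2].
have p1 : (0 < tau%:R :> R) by rewrite ltr0n.
have p2 : (0 < (tau + d tau)%N%:R :> R) by rewrite ltr0n; exact: leq_trans h1 (leq_addr _ _).
split.
- by apply: divr_ge0; exact: ler0n.
- by move=> ->; rewrite mul0r.
- by rewrite ler_pdivrMr // mul1r ler_nat leq_addl.
- apply: ler_wpM2l; first exact: ler0n.
  by rewrite lef_pV2 ?posrE // ler_nat leq_addr.
Qed.

Lemma SM_le : SM <= 3 * K.
Proof.
have -> : 3 * K = (2 + 1) * K by ring.
apply: sumK; first by rewrite ler1n.
move=> tau /andP [h1 h2].
split.
- rewrite le_min; apply/andP; split; first by [].
  by apply: divr_ge0; exact: ler0n.
- by move=> ->; rewrite mul0r; apply: min_r.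
- by rewrite ge_min lexx.
- by rewrite ge_min lexx orbT.
Qed.

Lemma Sc_sq t : (1 <= t <= T)%N ->
  S t ^+ 2 <= 2 * \sum_(1 <= tau < T.+1) ((tau + d tau)%N == t)%:R * (d tau).+1%:R.
Proof.
move=> ht.
set M := fun tau tau' : nat => ((tau + d tau)%N == t)%:R * ((tau' + d tau')%N == t)%:R : R.
have e : S t ^+ 2 = \sum_(1 <= tau < T.+1) \sum_(1 <= tau' < T.+1) M tau tau'.
  rewrite expr2 /Sc mulr_suml; apply: eq_bigr => tau _; rewrite mulr_sumr //.
have M0 tau tau' : 0 <= M tau tau' by apply: mulr_ge0; exact: ler0n.
have Ms tau tau' : M tau tau' = M tau' tau by rewrite /M mulrC.
have step : S t ^+ 2 <= \sum_(1 <= tau < T.+1) \sum_(1 <= tau' < T.+1) (M tau tau' * (tau <= tau')%N%:R)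
    + \sum_(1 <= tau < T.+1) \sum_(1 <= tau' < T.+1) (M tau tau' * (tau' <= tau)%N%:R).
  rewrite e -big_split /=; apply: ler_sum_nat => tau _; rewrite -big_split /=.
  apply: ler_sum_nat => tau' _; rewrite -mulrDr.
  have [h|h] := leqP tau tau'.
    rewrite mulr1n -[X in X <= _]mulr1; apply: ler_wpM2l; [exact: M0 | rewrite lerDl; exact: ler0n].
  by rewrite (ltnW h) mulr0n add0r mulr1n mulr1.
have sym : \sum_(1 <= tau < T.+1) \sum_(1 <= tau' < T.+1) (M tau tau' * (tau' <= tau)%N%:R) =
           \sum_(1 <= tau < T.+1) \sum_(1 <= tau' < T.+1) (M tau tau' * (tau <= tau')%N%:R).
  rewrite exchange_big /=; apply: eq_bigr => tau _; apply: eq_bigr => tau' _; by rewrite Ms.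
rewrite sym in step; apply: le_trans step _.
rewrite -mulr2n -[X in X <= _]mulr_natl; apply: ler_wpM2l; first by [].
apply: ler_sum_nat => tau htau.
have [eq|ne] := eqVneq (tau + d tau)%N t; last first.
  rewrite mulr0n mul0r big1; first exact: lexx.
  by move=> tau' _; rewrite /M (negbTE ne) !mul0r.
rewrite mulr1n mul1r.
apply: le_trans (_ : \sum_(1 <= tau' < T.+1) ((tau <= tau')%N && (tau' < t.+1)%N)%:R <= _); last first.
  by apply: le_trans (cnt_le _ _ _ _ _) _; rewrite -eq subSn ?leq_addr // addKn.
apply: ler_sum_nat => tau' _; rewrite /M eq eqxx mul1r.
have [e'|ne'] := eqVneq (tau' + d tau')%N t; last by rewrite mul0r ler0n.
by rewrite mul1r -e' ltnS leq_addr andbT.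
Qed.

Lemma Q1_D : Q1 R d T <= 2 * Hs R T + 2 * SA.
Proof.
rewrite /Q1.
apply: le_trans (_ : \sum_(1 <= t < T.+1) (2 * \sum_(1 <= tau < T.+1) ((tau + d tau)%N == t)%:R * (d tau).+1%:R) / t%:R <= _).
  apply: ler_sum_nat => t ht; apply: ler_wpM2r; first by rewrite invr_ge0 ler0n.
  by apply: Sc_sq; rewrite -ltnS.
have -> : \sum_(1 <= t < T.+1) (2 * \sum_(1 <= tau < T.+1) ((tau + d tau)%N == t)%:R * (d tau).+1%:R) / t%:R
   = 2 * \sum_(1 <= t < T.+1) \sum_(1 <= tau < T.+1) ((tau + d tau)%N == t)%:R * ((d tau).+1%:R / t%:R) :> R.
  rewrite mulr_sumr; apply: eq_bigr => t _; rewrite -mulrA mulr_suml; congr (_ * _).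
  by apply: eq_bigr => tau _; rewrite mulrA.
rewrite (regroup hd (fun tau t => (d tau).+1%:R / t%:R)) -mulrDr.
apply: ler_wpM2l; first by [].
rewrite /Hs /SA -big_split /=; apply: ler_sum_nat => tau /andP [h1 _].
rewrite -addn1 natrD mulrDl mul1r addrC lerD2l; exact: inv_le.
Qed.

Lemma min_split (X A B : R) : X <= A + B -> 0 <= B -> Num.min 2 X <= Num.min 2 A + B.
Proof.
move=> hX hB.
have [h|h] := leP 2 A.
  have m1 : 2 <= Num.min 2 A by rewrite le_min lexx h.
  have m2 : Num.min 2 X <= 2 by rewrite ge_min lexx.
  lra.
have m1 : A <= Num.min 2 A by rewrite le_min lexx (ltW h).
have m2 : Num.min 2 X <= X by rewrite ge_min lexx orbT.
lra.
Qed.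

Definition P2 tau : R := \sum_(1 <= tau' < T.+1) ((tau'.+1 <= tau)%N && (tau < (tau' + d tau').+1)%N)%:R / (tau' + d tau')%N%:R.

Lemma P2_ge0 tau : 0 <= P2 tau.
Proof. by apply: sumr_ge0 => i _; apply: divr_ge0; exact: ler0n. Qed.

Lemma inner_le tau : (1 <= tau < T.+1)%N ->
  \sum_(tau <= s < tau + d tau) S s / s%:R <= (d tau)%:R / tau%:R + P2 tau.
Proof.
move=> htau; have /andP [t1 t2] := htau.
rewrite (inner_widen R hd htau).
have -> : \sum_(1 <= s < T.+1) ((tau <= s)%N && (s < tau + d tau)%N)%:R * (S s / s%:R)
   = \sum_(1 <= s < T.+1) S s * (((tau <= s)%N && (s < tau + d tau)%N)%:R / s%:R).
  by apply: eq_bigr => s _; rewrite mulrCA mulrA.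
rewrite (Sc_mul hd).
apply: le_trans (_ : \sum_(1 <= tau' < T.+1) (((tau <= tau')%N && (tau' < tau + d tau)%N)%:R / tau%:R
   + ((tau'.+1 <= tau)%N && (tau < (tau' + d tau').+1)%N)%:R / (tau' + d tau')%N%:R) <= _).
  apply: ler_sum_nat => tau' /andP [h1 h2].
  have pa : 0 < (tau' + d tau')%N%:R :> R by rewrite ltr0n; exact: leq_trans h1 (leq_addr _ _).
  have pt : 0 < tau%:R :> R by rewrite ltr0n.
  have [b|b] := boolP ((tau <= tau' + d tau')%N && (tau' + d tau' < tau + d tau)%N); last first.
    by rewrite mulr0n mul0r; apply: addr_ge0; apply: divr_ge0; exact: ler0n.
  move/andP: b => [b1 b2]; rewrite mulr1n mul1r.
  have [c|c] := leqP tau tau'.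
    have -> : (tau' < tau + d tau)%N by exact: leq_ltn_trans (leq_addr _ _) b2.
    rewrite /= mulr1n mul1r; apply: le_trans (_ : (tau%:R)^-1 <= _); last first.
      by rewrite lerDl; apply: divr_ge0; exact: ler0n.
    by rewrite lef_pV2 ?posrE // ler_nat.
  rewrite /= ltnS b1 mulr0n mul0r add0r mulr1n mul1r; exact: lexx.
rewrite big_split /= -mulr_suml lerD2r; apply: ler_wpM2r; first by rewrite invr_ge0 ler0n.
by apply: le_trans (cnt_le _ _ _ _ _) _; rewrite addKn.
Qed.

Lemma Q2_D : Q2 R d T <= SM + SA.
Proof.
apply: le_trans (_ : \sum_(1 <= tau < T.+1) (Num.min 2 ((d tau)%:R / tau%:R) + P2 tau) <= _).
  apply: ler_sum_nat => tau ht; apply: min_split; [exact: inner_le | exact: P2_ge0].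
rewrite big_split /= lerD2l /P2 exchange_big /=; apply: ler_sum_nat => tau' _.
rewrite -mulr_suml; apply: ler_wpM2r; first by rewrite invr_ge0 ler0n.
by apply: le_trans (cnt_le _ _ _ _ _) _; rewrite subSS addKn.
Qed.

Lemma comb_D : Q1 R d T / 2 + Q2 R d T <= Hs R T + 7 * K.
Proof.
have h1 := Q1_D; have h2 := Q2_D; have h3 := SA_le; have h4 := SM_le.
lra.
Qed.
End CombD2.

Section Main.
Variables (R : realType) (n T : nat) (X : set 'rV[R]_n)
         (f : nat -> 'rV[R]_n -> R) (d : nat -> nat) (lam G : R)
         (x : nat -> 'rV[R]_n) (u : 'rV[R]_n).
Hypothesis cX : convex_dom X.
Hypothesis l0 : 0 < lam.
Hypothesis G0 : 0 <= G.
Hypothesis hd : forall t, (1 <= t <= T)%N -> (t + d t <= T)%N.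
Hypothesis hf : forall t, (1 <= t <= T)%N ->
       (forall y, X y -> differentiable (f t) y) /\
       strongly_convex_on lam X (f t) /\
       (forall y, X y -> norm2 (grad (f t) y) <= G).
Hypothesis X1 : X (x 1%N).
Hypothesis hx : forall t, (1 <= t < T)%N ->
       X (x t.+1) /\
       forall y, X y ->
         omd_obj d (fun tau => grad (f tau) (x tau)) (2 / (t%:R * lam)) (x t) t (x t.+1)
         <= omd_obj d (fun tau => grad (f tau) (x tau)) (2 / (t%:R * lam)) (x t) t y.
Hypothesis Xu : X u.

Local Notation g tau := (grad (f tau) (x tau)).
Local Notation S := (Sc R d T).

Lemma Xx t : (1 <= t <= T)%N -> X (x t).
Proof.
elim: t => [|t IH] /andP [h1 h2]; first by [].
have [t0|tp] := posnP t; first by rewrite t0.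
by case: (hx (t := t) _) => //; rewrite tp.
Qed.

Lemma gb tau : (1 <= tau <= T)%N -> norm2 (g tau) <= G.
Proof. by move=> h; have [_ [_ H]] := hf h; apply: H; exact: Xx. Qed.

Definition P t : 'rV[R]_n := \sum_(1 <= tau < T.+1) ((tau + d tau)%N == t)%:R *: g tau.

Lemma dotpNr' (a b : 'rV[R]_n) : dotp a (- b) = - dotp a b.
Proof. by rewrite dotpC dotpNl dotpC. Qed.

Lemma dotP t w : dotp (P t) w = \sum_(1 <= tau < T.+1) ((tau + d tau)%N == t)%:R * dotp (g tau) w.
Proof. by rewrite /P dotp_suml; apply: eq_bigr => tau _; rewrite dotpZl. Qed.

Lemma dotP_le t w : dotp (P t) w <= S t * G * norm2 w.
Proof.
rewrite dotP /Sc -mulrA mulr_suml; apply: ler_sum_nat => tau /andP [h1 h2].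
apply: ler_wpM2l; first exact: ler0n.
apply: le_trans (CS _ _) _; apply: ler_wpM2r; first exact: norm2_ge0.
by apply: gb; rewrite h1 -ltnS.
Qed.

Lemma obj_eq t y : (1 <= t < T)%N ->
  omd_obj d (fun tau => g tau) (2 / (t%:R * lam)) (x t) t y =
  dotp (P t) y + (t%:R * lam / 2) * norm2 (y - x t) ^+ 2.
Proof.
move=> /andP [t1 tT]; rewrite /omd_obj invf_div; congr (_ + _).
rewrite dotP big_mkcond /=.
rewrite [RHS](@big_cat_nat _ _ _ t.+1) /=; [|by []|by rewrite ltnS; exact: ltnW].
rewrite [X in _ = _ + X]big1_seq ?addr0; last first.
  move=> tau /andP [_]; rewrite mem_index_iota => /andP [h _].
  have -> : ((tau + d tau)%N == t) = false.
    apply/negbTE; rewrite neq_ltn; apply/orP; right; exact: leq_trans h (leq_addr _ _).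
  by rewrite mul0r.
rewrite big_ltn //= /in_o /= add0r; apply: eq_big_nat => tau /andP [h1 _].
rewrite h1 /= ltnS -leqNgt.
case: eqVneq => [->|ne]; first by rewrite leqnn mul1r.
rewrite mul0r; case: ifP => //; move/andP=> [a b].
by move: ne; rewrite eqn_leq a b.
Qed.


Lemma vi t y : (1 <= t < T)%N -> X y ->
  0 <= dotp (P t) (y - x t.+1) + t%:R * lam * dotp (x t.+1 - x t) (y - x t.+1).
Proof.
move=> ht Xy; have [Xn H] := hx ht.
have c0 : 0 < t%:R * lam / 2.
  by apply: divr_gt0; [apply: mulr_gt0; [rewrite ltr0n; case/andP: ht | exact: l0] | by []].
have := @opt_vi R n X (t%:R * lam / 2) (P t) (x t) (x t.+1) cX c0 Xn.
have e2 : 2 * (t%:R * lam / 2) = t%:R * lam by field.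
rewrite e2; apply => //.
by move=> z Xz; rewrite -!obj_eq //; exact: H.
Qed.

Lemma tlam_gt0 t : (1 <= t)%N -> 0 < t%:R * lam.
Proof. by move=> h; apply: mulr_gt0; [rewrite ltr0n | exact: l0]. Qed.

Lemma step t : (1 <= t < T)%N -> norm2 (x t.+1 - x t) <= S t * G / (t%:R * lam).
Proof.
move=> ht.
have htT : (1 <= t <= T)%N by case/andP: ht => a b; rewrite a ltnW.
have v := vi ht (Xx htT).
have tl := tlam_gt0 (elimT andP ht).1.
have e : dotp (x t.+1 - x t) (x t - x t.+1) = - norm2 (x t.+1 - x t) ^+ 2.
  by rewrite norm2_sq -(opprB (x t.+1)) dotpNr'.
rewrite e in v.
have b := dotP_le t (x t - x t.+1).
rewrite norm2_sub_sym in b.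
set D := norm2 (x t.+1 - x t) in v b *.
have D0 : 0 <= D by exact: norm2_ge0.
have SG0 : 0 <= S t * G by apply: mulr_ge0; [exact: Sc_ge0 | exact: G0].
rewrite ler_pdivlMr //.
have [Dz|Dp] := eqVneq D 0; first by rewrite Dz mul0r.
have Dp' : 0 < D by rewrite lt_def Dp D0.
have h : (t%:R * lam * D) * D <= (S t * G) * D by rewrite -mulrA -expr2; lra.
rewrite ler_pM2r // in h.
by rewrite mulrC.
Qed.

Lemma amgm (a b c : R) : 0 < c -> a * b - c / 2 * b ^+ 2 <= a ^+ 2 / (2 * c).
Proof.
move=> c0.
have e : a ^+ 2 / (2 * c) - (a * b - c / 2 * b ^+ 2) = (a - c * b) ^+ 2 / (2 * c).
  by field; rewrite gt_eqF.
rewrite -subr_ge0 e; apply: divr_ge0; first exact: sqr_ge0.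
by rewrite mulr_ge0 // ltW.
Qed.

Definition Dd t : R := norm2 (x t - u) ^+ 2.

Lemma polar (p q : 'rV[R]_n) : dotp (- (p + q)) (- (p + q)) = dotp p p + 2 * dotp p q + dotp q q.
Proof. rewrite dotpNl dotpNr' opprK dotpDl !dotpDr (dotpC q p); ring. Qed.

Lemma perT t : (1 <= t < T)%N ->
  dotp (P t) (x t - u) <= t%:R * lam / 2 * (Dd t - Dd t.+1) + (S t * G) ^+ 2 / (2 * (t%:R * lam)).
Proof.
move=> ht.
have v := vi ht Xu.
have tl := tlam_gt0 (elimT andP ht).1.
set p := x t.+1 - x t; set q := u - x t.+1.
have e1 : x t - u = - (p + q) by rewrite /p /q [in RHS]addrC [in RHS]addrA subrK opprB.
have e2 : x t.+1 - u = - q by rewrite /q opprB.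
have hD1 : Dd t = dotp p p + 2 * dotp p q + dotp q q by rewrite /Dd e1 norm2_sq polar.
have hD2 : Dd t.+1 = dotp q q by rewrite /Dd e2 norm2_sq dotpNl dotpNr' opprK.
have split : dotp (P t) (x t - u) = dotp (P t) (x t - x t.+1) - dotp (P t) q.
  by rewrite /q -dotpBr; congr dotp; rewrite opprB addrA subrK.
have b := dotP_le t (x t - x t.+1).
rewrite norm2_sub_sym -/p in b.
have am := amgm (S t * G) (norm2 p) tl.
rewrite split hD1 hD2.
have pp : dotp p p = norm2 p ^+ 2 by rewrite norm2_sq.
rewrite pp.
lra.
Qed.

Lemma perT_last : (1 <= T)%N ->
  dotp (P T) (x T - u) <= T%:R * lam / 2 * Dd T + (S T * G) ^+ 2 / (2 * (T%:R * lam)).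
Proof.
move=> T1; have tl := tlam_gt0 T1.
have b := dotP_le T (x T - u).
have am := amgm (S T * G) (norm2 (x T - u)) tl.
rewrite /Dd; lra.
Qed.


Lemma tele (D : nat -> R) N : (1 <= N)%N ->
  \sum_(1 <= t < N) t%:R * (D t - D t.+1) + N%:R * D N = \sum_(1 <= t < N.+1) D t.
Proof.
elim: N => [|N IH] // h.
have [N0|Np] := posnP N.
  by rewrite N0 big_geq // big_nat1 mul1r add0r.
rewrite big_nat_recr //= [in RHS]big_nat_recr //= -(IH Np) -natr1.
ring.
Qed.

Lemma sumB : (1 <= T)%N ->
  \sum_(1 <= t < T.+1) dotp (P t) (x t - u) <=
  lam / 2 * \sum_(1 <= t < T.+1) Dd t + \sum_(1 <= t < T.+1) (S t * G) ^+ 2 / (2 * (t%:R * lam)).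
Proof.
move=> T1.
rewrite -(tele Dd T1) !big_nat_recr //=.
set c := fun t => (S t * G) ^+ 2 / (2 * (t%:R * lam)).
have h1 : \sum_(1 <= t < T) dotp (P t) (x t - u) <=
   \sum_(1 <= t < T) (t%:R * lam / 2 * (Dd t - Dd t.+1) + c t).
  by apply: ler_sum_nat => t ht; apply: perT.
have h2 := perT_last T1.
rewrite big_split /= in h1.
have e : \sum_(1 <= t < T) t%:R * lam / 2 * (Dd t - Dd t.+1) =
   lam / 2 * \sum_(1 <= t < T) t%:R * (Dd t - Dd t.+1).
  by rewrite mulr_sumr; apply: eq_bigr => t _; ring.
rewrite e in h1; rewrite /c in h1 *.
lra.
Qed.

Lemma regroupB :
  \sum_(1 <= t < T.+1) dotp (P t) (x t - u) =
  \sum_(1 <= tau < T.+1) dotp (g tau) (x (tau + d tau)%N - u).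
Proof.
rewrite -(regroup hd (fun tau t => dotp (g tau) (x t - u))).
by apply: eq_bigr => t _; rewrite dotP.
Qed.

Lemma dotp_sumr' (I : Type) (r : seq I) (Pr : pred I) (F : I -> 'rV[R]_n) v :
  dotp v (\sum_(i <- r | Pr i) F i) = \sum_(i <- r | Pr i) dotp v (F i).
Proof. by rewrite dotpC dotp_suml; apply: eq_bigr => i _; rewrite dotpC. Qed.

Lemma drift tau : (1 <= tau <= T)%N ->
  dotp (g tau) (x tau - x (tau + d tau)%N) <=
  G ^+ 2 / lam * Num.min 2 (\sum_(tau <= s < tau + d tau) S s / s%:R).
Proof.
move=> ht.
have ht' : (1 <= tau < T.+1)%N by rewrite ltnS.
have /andP [a1 a2] := a_range hd ht'.
rewrite ltnS in a2.
have Xt := Xx ht.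
have Xa : X (x (tau + d tau)%N) by apply: Xx; rewrite a1 a2.
have [df [sc gbd]] := hf ht.
set Y := \sum_(tau <= s < tau + d tau) S s / s%:R.
have c0 : 0 <= G ^+ 2 / lam by apply: divr_ge0; [exact: sqr_ge0 | exact: ltW].
have b1 : dotp (g tau) (x tau - x (tau + d tau)%N) <= G ^+ 2 / lam * 2.
  apply: le_trans (CS _ _) _.
  have dm := diam cX sc l0 df gbd Xt Xa.
  apply: le_trans (ler_pM (norm2_ge0 _) (norm2_ge0 _) (gb ht) dm) _.
  by rewrite le_eqVlt; apply/orP; left; apply/eqP; field; rewrite gt_eqF.
have b2 : dotp (g tau) (x tau - x (tau + d tau)%N) <= G ^+ 2 / lam * Y.
  have tel : x tau - x (tau + d tau)%N = \sum_(tau <= s < tau + d tau) (x s - x s.+1).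
    rewrite -opprB -(telescope_sumr x (leq_addr (d tau) tau)) -sumrN.
    by apply: eq_bigr => s _; rewrite opprB.
  rewrite tel dotp_sumr' /Y mulr_sumr; apply: ler_sum_nat => s /andP [s1 s2].
  have hs : (1 <= s < T)%N by rewrite (leq_trans (elimT andP ht).1 s1) (leq_trans s2 a2).
  apply: le_trans (CS _ _) _.
  rewrite norm2_sub_sym.
  have st := step hs.
  apply: le_trans (ler_pM (norm2_ge0 _) (norm2_ge0 _) (gb ht) st) _.
  have s0 : (s%:R : R) != 0 by rewrite pnatr_eq0 -lt0n; case/andP: hs.
  by rewrite le_eqVlt; apply/orP; left; apply/eqP; field; rewrite s0 gt_eqF.
have [h|h] := leP 2 Y.
  have m : 2 <= Num.min 2 Y by rewrite le_min lexx h.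
  by apply: le_trans b1 _; apply: ler_wpM2l.
have m : Y <= Num.min 2 Y by rewrite le_min lexx (ltW h).
by apply: le_trans b2 _; apply: ler_wpM2l.
Qed.

Lemma main_bound : (1 <= T)%N ->
  \sum_(1 <= t < T.+1) (f t (x t) - f t u) <= G ^+ 2 / lam * (Q1 R d T / 2 + Q2 R d T).
Proof.
move=> T1.
have per tau : (1 <= tau < T.+1)%N -> f tau (x tau) - f tau u <=
    dotp (g tau) (x (tau + d tau)%N - u) + dotp (g tau) (x tau - x (tau + d tau)%N) - lam / 2 * Dd tau.
  move=> ht; rewrite ltnS in ht.
  have [df [sc gbd]] := hf ht.
  have fo := first_order cX sc (df _ (Xx ht)) (Xx ht) Xu.
  have e1 : dotp (g tau) (x (tau + d tau)%N - u) + dotp (g tau) (x tau - x (tau + d tau)%N)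
      = - dotp (g tau) (u - x tau).
    rewrite -dotpDr -dotpNr' opprB; congr dotp.
    by rewrite addrC addrA subrK.
  rewrite e1 /Dd -(norm2_sub_sym u); lra.
apply: le_trans (ler_sum_nat per) _.
rewrite !big_split /= -regroupB sumrN.
have sB := sumB T1.
have sdr : \sum_(1 <= tau < T.+1) dotp (g tau) (x tau - x (tau + d tau)%N) <= G ^+ 2 / lam * Q2 R d T.
  rewrite /Q2 mulr_sumr; apply: ler_sum_nat => tau ht; apply: drift; by rewrite -ltnS.
have eD : \sum_(1 <= tau < T.+1) (lam / 2 * Dd tau) = lam / 2 * \sum_(1 <= tau < T.+1) Dd tau by rewrite mulr_sumr.
have eQ : \sum_(1 <= t < T.+1) (S t * G) ^+ 2 / (2 * (t%:R * lam)) = G ^+ 2 / lam * (Q1 R d T / 2).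
  rewrite /Q1 mulr_suml mulr_sumr; apply: eq_big_nat => t /andP [t1 _].
  have t0 : (t%:R : R) != 0 by rewrite pnatr_eq0 -lt0n.
  by field; rewrite t0 gt_eqF.
rewrite eD; rewrite eQ in sB.
rewrite mulrDr.
lra.
Qed.
End Main.

Section Fin.
Variable R : realType.

Lemma ln_step N : (1 <= N)%N -> (N.+1%:R : R)^-1 <= ln N.+1%:R - ln N%:R.
Proof.
move=> N1.
have p1 : (0 : R) < N%:R by rewrite ltr0n.
have p2 : (0 : R) < N.+1%:R by rewrite ltr0n.
have e : ln (N%:R / N.+1%:R) = ln N%:R - ln N.+1%:R :> R by rewrite ln_div ?posrE.
have e2 : N%:R / N.+1%:R = 1 + (- (N.+1%:R)^-1) :> R.
  by rewrite -natr1; field; rewrite -natr1 in p2; rewrite gt_eqF.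
have h : -1 < - (N.+1%:R : R)^-1.
  rewrite ltrN2 invf_lt1 //; by rewrite ltr1n.
have := le_ln1Dx h; rewrite -e2 e => H.
by rewrite -opprB lerNr.
Qed.

Lemma Hs_ln N : (1 <= N)%N -> Hs R N <= 1 + ln N%:R.
Proof.
elim: N => [|N IH] // h.
have [N0|Np] := posnP N.
  by rewrite N0 /Hs big_nat1 invr1 ln1 addr0.
rewrite /Hs big_nat_recr //= -/(Hs R N).
have := IH Np; have := ln_step Np.
move: (ln (N.+1%:R : R)) (ln (N%:R : R)) ((N.+1%:R : R)^-1) (Hs R N) => A B I H0.
lra.
Qed.

Lemma ln_half N : (2 <= N)%N -> 1 / 2 <= ln (N%:R : R).
Proof.
move=> N2.
have p : (0 : R) < N%:R by rewrite ltr0n; exact: leq_trans N2.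
have i0 : 0 < (N%:R : R)^-1 by rewrite invr_gt0.
have h : -1 < (N%:R : R)^-1 - 1 by move: i0; move: ((N%:R : R)^-1) => z; lra.
have e : 1 + ((N%:R : R)^-1 - 1) = (N%:R)^-1 by rewrite addrC subrK.
have := le_ln1Dx h; rewrite e lnV ?posrE //.
have : (N%:R : R)^-1 <= 1 / 2.
  rewrite mul1r lef_pV2 ?posrE //; by rewrite (ler_nat R 2 N).
move: (ln (N%:R : R)) ((N%:R : R)^-1) => A I.
lra.
Qed.
End Fin.

Theorem theoremE1 :
  exists C : nat, (0 < C)%N /\
  forall (R : realType) (n T : nat) (X : set 'rV[R]_n)
         (f : nat -> 'rV[R]_n -> R) (d : nat -> nat) (lam G : R)
         (x : nat -> 'rV[R]_n),
    X !=set0 -> closed X -> convex_dom X ->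
    0 < lam -> 0 <= G ->
    (forall t, (1 <= t <= T)%N -> (t + d t <= T)%N) ->
    (forall t, (1 <= t <= T)%N ->
       (forall y, X y -> differentiable (f t) y) /\
       strongly_convex_on lam X (f t) /\
       (forall y, X y -> norm2 (grad (f t) y) <= G)) ->
    X (x 1%N) ->
    (forall t, (1 <= t < T)%N ->
       X (x t.+1) /\
       forall y, X y ->
         omd_obj d (fun tau => grad (f tau) (x tau)) (2 / (t%:R * lam)) (x t) t (x t.+1)
         <= omd_obj d (fun tau => grad (f tau) (x tau)) (2 / (t%:R * lam)) (x t) t y) ->
    (2 <= T)%N ->
    forall u, X u ->
      \sum_(1 <= t < T.+1) (f t (x t) - f t u) <=
        (C%:R : R) * (G ^+ 2 / lam) *
        (ln (T%:R : R) + Num.min ((sigma_max d T)%:R * ln (T%:R : R))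
                                 (Num.sqrt ((d_tot d T)%:R))).
Proof.
exists 7%N; split; first by [].
move=> R n T X f d lam G x _ _ cX l0 G0 hd hf X1 hx T2 u Xu.
have T1 : (1 <= T)%N by exact: leq_trans T2.
have mb := main_bound cX l0 G0 hd hf X1 hx Xu T1.
have cs := comb_sig R hd.
have cD := comb_D R hd.
have HL := Hs_ln R T1.
have L2 := ln_half R T2.
change ((sigma_max d T)%:R) with (sig R d T).
change (Num.sqrt ((d_tot d T)%:R)) with (Kd R d T).
set L := ln (T%:R : R) in HL L2 *.
set sg := sig R d T in cs *.
set K := Kd R d T in cD *.
set c := G ^+ 2 / lam in mb *.
set Qs := Q1 R d T / 2 + Q2 R d T in mb cs cD.
have c0 : 0 <= c by apply: divr_ge0; [exact: sqr_ge0 | exact: ltW].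
have sg0 : 0 <= sg by exact: ler0n.
have K0 : 0 <= K by exact: sqrtr_ge0.
suff : Qs <= 7 * (L + Num.min (sg * L) K).
  move=> hQ; apply: le_trans mb _.
  rewrite -mulrA mulrCA; apply: ler_wpM2l => //.
have [h|h] := leP (sg * L) K.
  have m : sg * L <= Num.min (sg * L) K by rewrite le_min lexx h.
  have p1 : (1 + sg) * Hs R T <= (1 + sg) * (1 + L) by apply: ler_wpM2l => //; lra.
  have p2 : (1 + sg) * (1 + L) <= (1 + sg) * (3 * L) by apply: ler_wpM2l; lra.
  have : 0 <= sg * L by apply: mulr_ge0 => //; lra.
  nra.
have m : K <= Num.min (sg * L) K by rewrite le_min lexx (ltW h).
lra.
Qed.
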